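(* Let $\sigma\neq0$, let $T$ be the shift operator $(Tf)(x)=f(x+\sigma)$ acting on polynomials in $x$, and let $\Delta=\frac{1}{\sigma}\sum_{k=l}^{m}a_kT^k$ (integers $l<m$) with $\sum_{k=l}^m a_k=0$ and $\sum_{k=l}^m k a_k=1$. Let $\beta=\big(\sum_{k=l}^m a_k k T^k\big)^{-1}$ be its conjugate operator, and for $n\ge 1$ let $P_n(x)=(x\beta)^n\cdot 1$, i.e. the result of applying $n$ times the operator ''apply $\beta$, then multiply by $x$'' to the constant function $1$. Then $P_n$ is a well-defined polynomial in $x$ of degree $n$ of the form $$P_n(x)=\sum_{k=1}^{n}A_k\,\sigma^{n-k}x^k,\qquad A_n=1,$$ where all coefficients $A_k$ are finite numbers depending only on the coefficients $a_l,\dots,a_m$ and not on $\sigma$.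
   Context: Here $x$ denotes the operator of multiplication by $x$. The sequence $P_n$ (with $P_0=1$) is the basic sequence of $\Delta$, satisfying $\Delta P_n=nP_{n-1}$. *)

(* Defs.v *)
From HB Require Import structures.
From mathcomp Require Import all_boot all_order all_algebra.
Set Implicit Arguments. Unset Strict Implicit. Unset Printing Implicit Defensive.
Import Order.TTheory GRing.Theory Num.Theory.
Local Open Scope ring_scope.

(* Sum over the integer range k = l, l+1, ..., m (assumes l <= m). *)
Definition zsum (R : nmodType) (l m : int) (F : int -> R) : R :=
  \sum_(i < `|m - l|%N.+1) F (l + (i : nat)%:Z).

Definition shiftk (R : comRingType) (sigma : R) (k : int) (p : {poly R}) : {poly R} :=
  p \Po ('X + (k%:~R * sigma)%:P).

(* The operator  sum_{k=l}^m a_k k T^k , whose inverse is the conjugate operator beta. *)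
Definition conjinv (R : comRingType) (sigma : R) (l m : int) (a : int -> R)
  (p : {poly R}) : {poly R} :=
  zsum l m (fun k => (a k * k%:~R) *: shiftk sigma k p).

Fixpoint Pbasic (R : comRingType) (beta : {poly R} -> {poly R}) (n : nat) : {poly R} :=
  match n with
  | 0 => 1
  | n'.+1 => 'X * beta (Pbasic beta n')
  end.

(* Main.v *)
Require Import Defs.
From HB Require Import structures.
From mathcomp Require Import all_boot all_order all_algebra.
From mathcomp Require Import zify ring.
Import Order.TTheory GRing.Theory Num.Theory.
Local Open Scope ring_scope.

Section Aux.
Variable R : numFieldType.
Variables (l m : int) (a : int -> R).
Hypothesis h1 : zsum l m (fun k => k%:~R * a k) = 1.

Local Notation C s := (conjinv s l m a).

Lemma C_add s p q : C s (p + q) = C s p + C s q.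
Proof.
rewrite /conjinv /zsum -big_split /=; apply: eq_bigr => i _.
by rewrite /shiftk comp_polyD scalerDr.
Qed.

Lemma C_scale s c p : C s (c *: p) = c *: C s p.
Proof.
rewrite /conjinv /zsum scaler_sumr; apply: eq_bigr => i _.
by rewrite /shiftk comp_polyZ !scalerA mulrC.
Qed.

Lemma C0 s : C s 0 = 0.
Proof. by have := C_scale s 0 0; rewrite !scale0r. Qed.

Lemma C_sub s p q : C s (p - q) = C s p - C s q.
Proof. by rewrite C_add -scaleN1r C_scale scaleN1r. Qed.

Lemma sub_lt (p q : {poly R}) : p != 0 -> size q = size p ->
  lead_coef q = lead_coef p -> (size (q - p)%R < size p)%N.
Proof.
move=> p0 sq lq.
have hle : (size (q - p)%R <= size p)%N.
  by rewrite (leq_trans (size_polyD _ _)) // size_polyN sq maxnn.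
rewrite ltn_neqAle hle andbT; apply/eqP => E.
have : lead_coef (q - p) = 0.
  by rewrite lead_coefE E coefB -{1}sq -!lead_coefE lq subrr.
move/eqP; rewrite lead_coef_eq0 => /eqP E0.
by move: E; rewrite E0 size_poly0 => /esym/eqP; rewrite size_poly_eq0 (negPf p0).
Qed.

Lemma shift_diff (p : {poly R}) d : p != 0 ->
  (size (p \Po ('X + d%:P) - p)%R < size p)%N.
Proof.
move=> p0; apply: sub_lt => //; first by rewrite size_comp_poly2 // size_XaddC.
by rewrite lead_coef_comp ?size_XaddC // lead_coefXaddC expr1n mulr1.
Qed.

Lemma Cminus s p : p != 0 -> (size (C s p - p)%R < size p)%N.
Proof.
move=> p0.
have -> : C s p - p = zsum l m (fun k => (a k * k%:~R) *: (shiftk s k p - p)).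
  have {2}-> : p = zsum l m (fun k => (a k * k%:~R) *: p).
    rewrite /zsum -scaler_suml.
    have -> : \sum_(i < `|m - l|%N.+1) a (l + (i : nat)%:Z) * (l + (i : nat)%:Z)%:~R = 1.
      by rewrite -[in RHS]h1 /zsum; apply: eq_bigr => i _; rewrite mulrC.
    by rewrite scale1r.
  rewrite /conjinv /zsum -sumrB; apply: eq_bigr => i _; by rewrite scalerBr.
rewrite /zsum; apply: (big_ind (fun q : {poly R} => (size q < size p)%N)).
- by rewrite size_poly0 lt0n size_poly_eq0.
- move=> x y hx hy; rewrite (leq_ltn_trans (size_polyD _ _)) //.
  by rewrite gtn_max hx hy.
- move=> i _; rewrite (leq_ltn_trans (size_scale_leq _ _)) //.
  exact: shift_diff.
Qed.

Definition N s (q : {poly R}) := C s q - q.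

Lemma N_scale s c q : N s (c *: q) = c *: N s q.
Proof. by rewrite /N C_scale scalerBr. Qed.

Lemma N_size s q : (size (N s q) <= (size q).-1)%N.
Proof.
have [->|q0] := eqVneq q 0; first by rewrite /N C0 subrr size_poly0.
by rewrite /N -ltnS prednK ?lt0n ?size_poly_eq0 //; apply: Cminus.
Qed.

Lemma iterN_size s j q : (size (iter j (N s) q) <= size q - j)%N.
Proof.
elim: j => [|j IH] /=; first by rewrite subn0.
by rewrite (leq_trans (N_size _ _)) // subnS -!subn1 leq_sub2r.
Qed.

Definition beta s (p : {poly R}) :=
  \sum_(0 <= j < size p) ((-1) ^+ j) *: iter j (N s) p.

Lemma C_sum s (n : nat) (F : nat -> {poly R}) :
  C s (\sum_(0 <= j < n) F j) = \sum_(0 <= j < n) C s (F j).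
Proof. exact: (big_morph _ (C_add s) (C0 s)). Qed.

Lemma C_beta s p : C s (beta s p) = p.
Proof.
rewrite /beta C_sum.
set g := fun j => ((-1) ^+ j) *: iter j (N s) p.
have -> : \sum_(0 <= j < size p) C s ((-1) ^+ j *: iter j (N s) p) =
          \sum_(0 <= j < size p) - (g j.+1 - g j).
  apply: eq_bigr => j _; rewrite /g /= -/(N s _) C_scale.
  have -> : C s (iter j (N s) p) = iter j (N s) p + N s (iter j (N s) p).
    by rewrite /N addrC subrK.
  by rewrite scalerDr exprS mulN1r scaleNr opprB opprK.
rewrite sumrN telescope_sumr // opprB /g expr0 scale1r /=.
have : (size (iter (size p) (N s) p) <= 0)%N by rewrite (leq_trans (iterN_size _ _ _)) // subnn.
by rewrite size_poly_leq0 => /eqP ->; rewrite scaler0 subr0.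
Qed.

Lemma C_inj s : injective (C s).
Proof.
move=> p q E; apply/eqP; rewrite -subr_eq0; apply/eqP.
have E0 : C s (p - q) = 0 by rewrite C_sub E subrr.
apply/eqP; apply/negPn/negP => r0.
by have := Cminus s _ r0; rewrite E0 sub0r size_polyN ltnn.
Qed.

Lemma beta_C s p : beta s (C s p) = p.
Proof. by apply: (@C_inj s); rewrite C_beta. Qed.

Lemma size_C s r : r != 0 -> size (C s r) = size r.
Proof.
move=> r0; have -> : C s r = r + (C s r - r) by rewrite addrC subrK.
by rewrite size_polyDl // Cminus.
Qed.

Lemma lead_C s r : r != 0 -> lead_coef (C s r) = lead_coef r.
Proof.
move=> r0; have -> : C s r = r + (C s r - r) by rewrite addrC subrK.
by rewrite lead_coefDl // Cminus.
Qed.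

Definition S (c : R) (q : {poly R}) := q \Po (c *: 'X).

Lemma S_S c d q : c * d = 1 -> S d (S c q) = q.
Proof.
move=> cd; rewrite /S -comp_polyA comp_polyZ comp_polyX scalerA cd scale1r.
exact: comp_polyXr.
Qed.

Lemma S_sum c (n : nat) (F : 'I_n -> {poly R}) :
  S c (\sum_(j < n) F j) = \sum_(j < n) S c (F j).
Proof.
apply: (big_morph _ (fun x y => comp_polyD x y _)); exact: comp_poly0.
Qed.

Lemma shiftk_S s k q : s != 0 ->
  shiftk s k (S s^-1 q) = S s^-1 (shiftk 1 k q).
Proof.
move=> s0; rewrite /shiftk /S -!comp_polyA; congr (q \Po _).
rewrite comp_polyZ comp_polyX comp_polyD comp_polyX comp_polyC.
rewrite scalerDr; congr (_ + _); by rewrite -mul_polyC -polyCM mulr1 mulrCA mulVf // mulr1.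
Qed.

Lemma C_S s q : s != 0 -> C s (S s^-1 q) = S s^-1 (C 1 q).
Proof.
move=> s0; rewrite /conjinv /zsum S_sum; apply: eq_bigr => i _.
by rewrite shiftk_S // /S comp_polyZ.
Qed.

Lemma coef_S c q i : (S c q)`_i = c ^+ i * q`_i.
Proof.
rewrite /S coef_comp_poly.
under eq_bigr => j _ do rewrite exprZn coefZ coefXn.
case: (ltnP i (size q)) => hi.
  rewrite (bigD1 (Ordinal hi)) //= big1 ?addr0; first by rewrite eqxx mulr1 mulrC.
  move=> j /eqP hj; case: eqP => [E|_]; last by rewrite !mulr0.
  by exfalso; apply: hj; apply: val_inj; rewrite /= E.
rewrite nth_default // mulr0 big1 // => j _; case: eqP => [E|_]; last by rewrite !mulr0.
by exfalso; have := ltn_ord j; rewrite -E; lia.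
Qed.

Lemma S_Z c d q : S c (d *: q) = d *: S c q.
Proof. exact: comp_polyZ. Qed.
Lemma S_M c p q : S c (p * q) = S c p * S c q.
Proof. exact: comp_polyM. Qed.
Lemma S_X c : S c 'X = c *: 'X.
Proof. exact: comp_polyX. Qed.
Lemma S_1 c : S c 1 = 1.
Proof. exact: comp_polyC. Qed.
Lemma size_S c q : c != 0 -> size (S c q) = size q.
Proof. by move=> c0; rewrite /S size_comp_poly2 // size_scale // size_polyX. Qed.

End Aux.

Theorem theorem2p4 (R : numFieldType) (l m : int) (a : int -> R) :
  l < m ->
  zsum l m a = 0 ->
  zsum l m (fun k => k%:~R * a k) = 1 ->
  exists A : nat -> nat -> R,
    (forall n : nat, (0 < n)%N -> A n n = 1) /\
    forall sigma : R, sigma != 0 ->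
      (exists beta : {poly R} -> {poly R},
          cancel (conjinv sigma l m a) beta /\ cancel beta (conjinv sigma l m a)) /\
      forall beta : {poly R} -> {poly R},
        cancel (conjinv sigma l m a) beta -> cancel beta (conjinv sigma l m a) ->
        forall n : nat, (0 < n)%N ->
          Pbasic beta n = \sum_(1 <= k < n.+1) (A n k * sigma ^+ (n - k)) *: 'X^k
          /\ size (Pbasic beta n) = n.+1.
Proof.
move=> _ _ h1.
set b1 := beta R l m a 1.
set P1 := Pbasic b1.
have b1C : cancel (conjinv 1 l m a) b1 by move=> p; apply: beta_C.
have Cb1 : cancel b1 (conjinv 1 l m a) by move=> p; apply: C_beta.
have P1_prop : forall n, size (P1 n) = n.+1 /\ lead_coef (P1 n) = 1.
  elim=> [|n [IHs IHl]]; first by rewrite /P1 /= size_poly1 lead_coef1.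
  have P0 : P1 n != 0 by rewrite -size_poly_eq0 IHs.
  set r := b1 (P1 n).
  have r0 : r != 0.
    by apply: contraNneq P0 => E; rewrite -(Cb1 (P1 n)) -/r E C0.
  have sr : size r = size (P1 n) by rewrite -{1}(Cb1 (P1 n)) -/r size_C.
  have lr : lead_coef r = lead_coef (P1 n) by rewrite -{1}(Cb1 (P1 n)) -/r lead_C.
  rewrite /P1 /= -/P1 -/r mulrC size_mulX // lead_coefMX sr lr IHs IHl; by split.
exists (fun n k => (P1 n)`_k); split.
  by move=> n _; have [s1 l1] := P1_prop n; rewrite -l1 lead_coefE s1.
move=> s s0; split.
  by exists (beta R l m a s); split => p; [apply: beta_C | apply: C_beta].
move=> bt btC Cbt.
have Sinv1 : forall q, S R s^-1 (S R s q) = q by move=> q; apply: S_S; rewrite mulfV.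
have Sinv2 : forall q, S R s (S R s^-1 q) = q by move=> q; apply: S_S; rewrite mulVf.
have bconj : forall p, bt p = S R s^-1 (b1 (S R s p)).
  move=> p; rewrite -[p in LHS]Sinv1 -[S R s p in LHS]Cb1 -C_S //; exact: btC.
have b1Z : forall c q, b1 (c *: q) = c *: b1 q.
  by move=> c q; apply: (can_inj b1C); rewrite C_scale !Cb1.
have Pform : forall n, Pbasic bt n = s ^+ n *: S R s^-1 (P1 n).
  elim=> [|n IH] /=; first by rewrite expr0 scale1r S_1.
  rewrite IH bconj S_Z Sinv2 b1Z S_Z {2}/P1 /= -/P1 S_M S_X.
  have hs : s ^+ n = s ^+ n.+1 * s^-1 by rewrite exprSr mulfK.
  by rewrite hs -!mul_polyC polyCM; ring.
move=> n n0; rewrite Pform; have [s1 l1] := P1_prop n; split; last first.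
  by rewrite size_scale ?expf_neq0 // size_S ?invr_eq0.
have P10 : (P1 n)`_0 = 0.
  by case: n n0 {s1 l1} => // n _; rewrite /P1 /= coefXM.
transitivity (\sum_(0 <= k < n.+1) ((P1 n)`_k * s ^+ (n - k)) *: 'X^k); last first.
  by rewrite (big_ltn (ltn0Sn n)) /= P10 mul0r scale0r add0r.
rewrite big_mkord -(poly_def _ (fun k => (P1 n)`_k * s ^+ (n - k))); apply/polyP => i; rewrite coefZ coef_S coef_poly.
case: ltnP => hi.
  have hsi : s ^+ i != 0 by rewrite expf_neq0.
  rewrite expfB_cond; last by rewrite (negPf s0) add0n -ltnS.
  rewrite exprVn; field; exact: hsi.
by rewrite nth_default ?mulr0 // s1.
Qed.
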